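(* Let $\mathcal{S}$ be a reduced LLD subspace of $\mathcal{L}(U,V)$, and let $c$ be the greatest integer for which $\mathcal{S}$ is $c$-LLD. Then $\widehat{\mathcal{S}}$ is semi-primitive if and only if $\mathcal{S}$ is minimal among the $c$-LLD subspaces of $\mathcal{L}(U,V)$.
   Context: $U,V$ finite-dimensional over a field $\mathbb{K}$. $\mathcal{S}$ is $c$-LLD if for every $x\in U$, $\dim\{f\in\mathcal{S}\mid f(x)=0\}\geq c$; LLD means $1$-LLD. $\mathcal{S}$ is reduced if $\bigcap_{f\in\mathcal{S}}\ker f=\{0\}$ and $\sum_{f\in\mathcal{S}}\mathrm{im} f=V$. $\widehat{\mathcal{S}}:=\{f\mapsto f(x)\mid x\in U\}\subseteq\mathcal{L}(\mathcal{S},V)$. For an operator space $\mathcal{T}\subseteq\mathcal{L}(W,V)$: $\mathcal{T}$ is $d$-defective if $\dim\ker g\geq d$ for all $g\in\mathcal{T}$; its defectiveness index is the greatest such $d$; $\mathcal{T}$ is semi-primitive if it is reduced and there is no linear hyperplane $W'$ of $W$ such that $\{g_{|W'}\mid g\in\mathcal{T}\}$ is $d$-defective, $d$ being the defectiveness index of $\mathcal{T}$. *)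

(* Defs.v *)
From HB Require Import structures.
From mathcomp Require Import all_boot all_order all_algebra.
Set Implicit Arguments. Unset Strict Implicit. Unset Printing Implicit Defensive.
Import GRing.Theory.
Local Open Scope ring_scope.
Local Open Scope vspace_scope.

Section Defs.
Variable K : fieldType.

Definition evalAt (U V : vectType K) (x : U) : 'Hom('Hom(U, V), V) :=
  linfun (fun f : 'Hom(U, V) => f x).

Definition cLLD (U V : vectType K) (c : nat) (S : {vspace 'Hom(U, V)}) : Prop :=
  forall x : U, (c <= \dim (S :&: lker (evalAt V x)))%N.

Definition is_lld_index (U V : vectType K) (c : nat) (S : {vspace 'Hom(U, V)}) : Prop :=
  cLLD c S /\ (forall c', cLLD c' S -> (c' <= c)%N).

(* reduced: the kernels of S meet in {0}, and the images of S span V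
   (i.e. the only subspace containing every im f, f in S, is V) *)
Definition reduced (U V : vectType K) (S : {vspace 'Hom(U, V)}) : Prop :=
  (forall x : U, (forall f, f \in S -> f x = 0%R) -> x = 0%R) /\
  (forall Wv : {vspace V}, (forall f, f \in S -> (limg f <= Wv)%VS) -> Wv = fullv).

(* S-hat = { f |-> f x | x in U } inside L(S, V) *)
Definition hatS (U V : vectType K) (S : {vspace 'Hom(U, V)})
  : {vspace 'Hom(subvs_of S, V)} :=
  limg (linfun (fun x : U => linfun (fun f : subvs_of S => (vsval f) x))).

Definition defective (W V : vectType K) (d : nat) (T : {vspace 'Hom(W, V)}) : Prop :=
  forall g, g \in T -> (d <= \dim (lker g))%N.

Definition is_def_index (W V : vectType K) (d : nat) (T : {vspace 'Hom(W, V)}) : Prop :=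
  defective d T /\ (forall d', defective d' T -> (d' <= d)%N).

Definition restr (W V : vectType K) (W' : {vspace W}) (g : 'Hom(W, V))
  : 'Hom(subvs_of W', V) :=
  (g \o linfun (@vsval _ _ W'))%VF.

Definition semi_primitive (W V : vectType K) (T : {vspace 'Hom(W, V)}) : Prop :=
  reduced T /\
  forall d, is_def_index d T ->
  ~ (exists W' : {vspace W},
       (\dim W').+1 = \dim (fullv : {vspace W}) /\
       (forall g, g \in T -> (d <= \dim (lker (restr W' g)))%N)).

Definition minimal_cLLD (U V : vectType K) (c : nat) (S : {vspace 'Hom(U, V)}) : Prop :=
  cLLD c S /\
  forall T : {vspace 'Hom(U, V)}, (T <= S)%VS -> cLLD c T -> T = S.

End Defs.

(* Main.v *)
Require Import Defs.
From HB Require Import structures.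
From mathcomp Require Import all_boot all_order all_algebra.
From mathcomp Require Import zify.
Set Implicit Arguments. Unset Strict Implicit.
Import GRing.Theory.
Local Open Scope ring_scope.
Local Open Scope vspace_scope.

Section Aux.
Variable K : fieldType.

Lemma linfunL (aT rT : vectType K) (f : aT -> rT) :
  linear f -> forall u, linfun f u = f u.
Proof.
move=> fL u.
pose lf : {linear aT -> rT} := HB.pack f (GRing.isLinear.Build _ _ _ _ f fL).
exact: (lfunE lf u).
Qed.

Lemma evalAtE (U V : vectType K) (x : U) (f : 'Hom(U,V)) : evalAt V x f = f x.
Proof. by rewrite /evalAt linfunL // => a g h; rewrite add_lfunE scale_lfunE. Qed.

Lemma dimsub (U : vectType K) (S : {vspace U}) :
  \dim (fullv : {vspace subvs_of S}) = \dim S.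
Proof. by rewrite dimvf. Qed.

Lemma limg_vsval (X : vectType K) (W : {vspace X}) :
  limg (linfun (@vsval _ _ W) : 'Hom(subvs_of W, X)) = W.
Proof.
apply: subv_anti; apply/andP; split; apply/subvP => w.
  by case/memv_imgP => u _ ->; rewrite lfunE /= subvsP.
move=> wW; rewrite -(vsprojK wW).
by have := memv_img (linfun (@vsval _ _ W)) (memvf (vsproj W w)); rewrite lfunE.
Qed.

Lemma hyper (X : vectType K) n : forall W0 : {vspace X},
  (\dim W0 + n.+1 = \dim (fullv : {vspace X}))%N ->
  exists W' : {vspace X}, (W0 <= W')%VS /\ (\dim W').+1 = \dim (fullv : {vspace X}).
Proof.
elim: n => [|n IH] W0 hd.
  by exists W0; rewrite subvv -hd addn1.
have : ~~ (fullv <= W0)%VS.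
  apply/negP => /dimvS; rewrite -hd; lia.
case/subvPn => v _ vW0.
have h1 : (\dim (W0 + <[v]>) <= \dim W0 + 1)%N.
  have := (dimv_add_leqif W0 <[v]>).1; rewrite dim_vline; case: (_ != _) => /=; lia.
have h2 : (\dim W0 < \dim (W0 + <[v]>))%N.
  rewrite ltn_neqAle; have [-> ->] := dimv_leqif_sup (addvSl W0 <[v]>).
  rewrite andbT; apply/negP => /subvP /(_ v).
  have := memv_add (mem0v W0) (memv_line v); rewrite add0r => H /(_ H).
  by rewrite (negPf vW0).
have [W' [s1 s2]] := IH (W0 + <[v]>) ltac:(lia).
by exists W'; split => //; apply: subv_trans s1; apply: addvSl.
Qed.

Section Main.
Variables (U V : vectType K) (S : {vspace 'Hom(U, V)}).

Definition iota : 'Hom(subvs_of S, 'Hom(U,V)) := linfun (@vsval _ _ S).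
Definition gx (x : U) : 'Hom(subvs_of S, V) :=
  linfun (fun f : subvs_of S => (vsval f) x).

Lemma gxE x f : gx x f = vsval f x.
Proof.
by rewrite /gx linfunL // => a g h; rewrite linearP /= add_lfunE scale_lfunE.
Qed.

Lemma gx_comp x : gx x = (evalAt V x \o iota)%VF.
Proof. by apply/lfunP => f; rewrite comp_lfunE evalAtE gxE lfunE. Qed.

Lemma memhat g : g \in hatS S <-> exists x, g = gx x.
Proof.
have hL : forall x, linfun (fun x : U => gx x) x = gx x.
  apply: linfunL => a x y; apply/lfunP => f.
  by rewrite add_lfunE scale_lfunE !gxE linearP.
split.
  by case/memv_imgP => x _ ->; exists x; rewrite hL.
case=> x ->; rewrite /hatS -/(gx _).
by have := memv_img (linfun (fun x : U => gx x)) (memvf x); rewrite hL.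
Qed.

Lemma iota_inj : lker iota = 0%VS.
Proof. by apply/eqP/lker0P => f g; rewrite !lfunE; apply: subvs_inj. Qed.

Lemma dim_iota (W : {vspace subvs_of S}) : \dim (iota @: W) = \dim W.
Proof. by rewrite limg_dim_eq // iota_inj capv0. Qed.

Lemma iota_sub (W : {vspace subvs_of S}) : (iota @: W <= S)%VS.
Proof. by apply/subvP => f /memv_imgP [u _ ->]; rewrite lfunE subvsP. Qed.

Lemma iota_full : iota @: fullv = S.
Proof. exact: limg_vsval. Qed.

Lemma dim_lker_restr (W : {vspace subvs_of S}) x :
  \dim (lker (restr W (gx x))) = \dim ((iota @: W) :&: lker (evalAt V x)).
Proof.
have h1 := limg_ker_dim (restr W (gx x)) fullv.
rewrite capfv dimsub /restr limg_comp limg_vsval in h1.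
have e : \dim (gx x @: W) = \dim (evalAt V x @: (iota @: W)) by rewrite -limg_comp -gx_comp.
have h2 := limg_ker_dim (evalAt V x) (iota @: W).
rewrite dim_iota in h2.
rewrite /restr; apply/(@addIn (\dim (evalAt V x @: (iota @: W)))).
rewrite -{1}e h1 h2.
by [].
Qed.

Lemma dim_lker_gx x :
  \dim (lker (gx x)) = \dim (S :&: lker (evalAt V x)).
Proof.
have h1 := limg_ker_dim (gx x) fullv.
rewrite capfv dimsub in h1.
have e : \dim (gx x @: fullv) = \dim (evalAt V x @: S) by rewrite gx_comp limg_comp iota_full.
have h2 := limg_ker_dim (evalAt V x) S.
apply/(@addIn (\dim (evalAt V x @: S))).
by rewrite -{1}e h1 h2.
Qed.

End Main.
End Aux.
Arguments gx {K U V S} x.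
Arguments iota {K U V S}.


Lemma limg_dim_le (K : fieldType) (X Y : vectType K) (f : 'Hom(X, Y)) (T : {vspace X}) :
  (\dim (f @: T) <= \dim T)%N.
Proof. by rewrite -(limg_ker_dim f T) leq_addl. Qed.

Theorem mainTheorem11 (K : fieldType) (U V : vectType K)
    (S : {vspace 'Hom(U, V)}) (c : nat) :
  reduced S -> cLLD 1 S -> is_lld_index c S ->
  (semi_primitive (hatS S) <-> minimal_cLLD c S).
Proof.
move=> Sr _ [Hc Hmax].
have hat_def : forall d, defective d (hatS S) <-> cLLD d S.
  move=> d; split => H.
    move=> x; rewrite -dim_lker_gx; apply: H; apply/memhat; by exists x.
  by move=> g /memhat [x ->]; rewrite dim_lker_gx; apply: H.
have idx : forall d, is_def_index d (hatS S) -> d = c.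
  move=> d [Dd Dmax]; apply/eqP; rewrite eqn_leq Hmax ?Dmax //; first exact/hat_def.
  exact/hat_def.
have idxc : is_def_index c (hatS S).
  split; first exact/hat_def.
  by move=> d' /hat_def; apply: Hmax.
have hatred : reduced (hatS S).
  split.
    move=> f H; apply: subvs_inj; rewrite linear0; apply/lfunP => x.
    rewrite zero_lfunE -gxE; apply: H; apply/memhat; by exists x.
  move=> Wv H; apply: Sr.2 => f fS; apply/subvP => v /memv_imgP [x _ ->].
  have := H (gx x) (proj2 (memhat _) (ex_intro _ x erefl)); move/subvP; apply.
  have -> : f x = gx x (vsproj S f) by rewrite gxE vsprojK.
  exact: memv_img (memvf _).
split.
- move=> [_ SP]; split => // T TS TL.
  apply/eqP; rewrite eqEdim TS /= leqNgt; apply/negP => lt.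
  pose W0 : {vspace subvs_of S} := (linfun (vsproj S) @: T)%VS.
  have TW0 : (T <= iota @: W0)%VS.
    apply/subvP => f fT.
    have -> : f = iota (vsproj S f) by rewrite lfunE /= vsprojK // (subvP TS).
    apply: memv_img; have := memv_img (linfun (vsproj S)) fT; by rewrite lfunE.
  have dW0 : (\dim W0 < \dim (fullv : {vspace subvs_of S}))%N.
    rewrite dimsub; apply: leq_ltn_trans lt; exact: limg_dim_le.
  have [W' [sW' dW']] := @hyper _ _ (\dim (fullv : {vspace subvs_of S}) - \dim W0).-1 W0
      ltac:(clear -dW0; lia).
  apply: (SP c idxc); exists W'; split => //.
  move=> g /memhat [x ->]; rewrite dim_lker_restr.
  apply: leq_trans (TL x) _; apply: dimvS; apply: capvS => //.
  exact: subv_trans TW0 (limgS _ sW').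
- move=> [_ Min]; split => // d /idx -> [W' [dW' HW']].
  have TL : cLLD c (iota @: W').
    move=> x; rewrite -dim_lker_restr; apply: HW'; apply/memhat; by exists x.
  have eT := Min _ (iota_sub W') TL.
  have := dim_iota W'; rewrite eT -dimsub -dW'.
  by move/esym/n_Sn.
Qed.
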